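(* Suppose that $\rho\ge2$ and $\rho=t-\Theta(1)$. Then $y_t(\rho)=\log(t2^t)+O(1)$. Explicitly: for all constants $C>c>0$ there is $K$ such that for every positive integer $t$ and real $\rho\ge2$ with $c<t-\rho<C$, we have $|y_t(\rho)-\log(t2^t)|\le K$.
   Context: $d_i=2^{\binom i2}i!$. For positive integer $t$ and real $1<\rho<t$, $x_t(\rho),y_t(\rho)$ are the unique reals $x,y$ with $\sum_{i=1}^t e^{x+iy}d_i^{-1}=1$ and $\sum_{i=1}^t ie^{x+iy}d_i^{-1}=\rho$. Logarithms are natural. *)

(* Defs.v *)
From Stdlib Require Import Reals Lra Lia Factorial ClassicalEpsilon.
Open Scope R_scope.

Definition d (i : nat) : R := 2 ^ (Nat.div (i * (i - 1)) 2) * INR (fact i).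

Fixpoint sum1 (t : nat) (f : nat -> R) : R :=
  match t with
  | O => 0
  | S t' => sum1 t' f + f t
  end.

Definition xy_eqs (t : nat) (rho x y : R) : Prop :=
  sum1 t (fun i => exp (x + INR i * y) / d i) = 1 /\
  sum1 t (fun i => INR i * exp (x + INR i * y) / d i) = rho.

(* (x_t(rho), y_t(rho)): the (unique, for 1 < rho < t) solution, chosen by
   Hilbert's epsilon. *)
Definition xy_t (t : nat) (rho : R) : R * R :=
  epsilon (inhabits (0, 0)) (fun p => xy_eqs t rho (fst p) (snd p)).

Definition x_t (t : nat) (rho : R) : R := fst (xy_t t rho).
Definition y_t (t : nat) (rho : R) : R := snd (xy_t t rho).

(* Main.v *)
Require Import Defs.
From Stdlib Require Import Reals Lra Lia Psatz Factorial ClassicalEpsilon.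
Open Scope R_scope.

Lemma sum1_ext n f g : (forall i, f i = g i) -> sum1 n f = sum1 n g.
Proof. intros H; induction n; simpl; [reflexivity| rewrite IHn, H; reflexivity]. Qed.

Lemma sum1_lin n a b f g :
  sum1 n (fun i => a * f i + b * g i) = a * sum1 n f + b * sum1 n g.
Proof. induction n; simpl; [ring| rewrite IHn; ring]. Qed.

Lemma sum1_nonneg n f : (forall i, 0 <= f i) -> 0 <= sum1 n f.
Proof. intros H; induction n; simpl; [lra| specialize (H (S n)); lra]. Qed.

Lemma sum1_ge_last n f : (forall i, 0 <= f i) -> f (S n) <= sum1 (S n) f.
Proof. intros H; simpl; pose proof (sum1_nonneg n f H); lra. Qed.

Lemma sum1_S n f : sum1 (S n) f = sum1 n f + f (S n).
Proof. reflexivity. Qed.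

Lemma sum1_cont n (f : nat -> R -> R) :
  (forall i, continuity (f i)) -> continuity (fun y => sum1 n (fun i => f i y)).
Proof.
  intros H; induction n; simpl.
  - apply continuity_const; intros a b; reflexivity.
  - apply (continuity_plus (fun y => sum1 n (fun i => f i y)) (f (S n))); auto.
Qed.

Lemma lemA_inv (w : nat -> R) : (forall i, 0 < w i) ->
  (forall i, (2 <= i)%nat -> w i <= / 4 * w (i - 1)%nat) ->
  forall n, (1 <= n)%nat ->
  sum1 n (fun i => (INR i - 1) * w i) + INR n * w n <= w 1%nat.
Proof.
  intros Hp Hr n Hn; induction Hn.
  - simpl. nra.
  - rewrite sum1_S. cbv beta. specialize (Hr (S m) ltac:(lia)).
    replace (S m - 1)%nat with m in Hr by lia.
    rewrite S_INR. pose proof (Hp m); pose proof (Hp (S m)).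
    assert (1 <= INR m) by (apply (le_INR 1); lia).
    assert ((2 * INR m + 1) * w (S m) <= (2 * INR m + 1) * (/4 * w m))
      by (apply Rmult_le_compat_l; lra).
    nra.
Qed.

Lemma lemA (w : nat -> R) t : (forall i, 0 < w i) ->
  (forall i, (2 <= i)%nat -> w i <= / 4 * w (i - 1)%nat) -> (1 <= t)%nat ->
  sum1 t (fun i => INR i * w i) < 2 * sum1 t w.
Proof.
  intros Hp Hr Ht. pose proof (lemA_inv w Hp Hr t Ht).
  assert (E : sum1 t (fun i => INR i * w i) = 1 * sum1 t (fun i => (INR i - 1) * w i) + 1 * sum1 t w).
  { rewrite <- (sum1_lin t 1 1 (fun i => (INR i - 1) * w i) w). apply sum1_ext; intros; ring. }
  assert (w 1%nat <= sum1 t w).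
  { destruct t as [|t']; [lia|]. clear -Hp Ht. induction t'.
    - apply sum1_ge_last; intros; apply Rlt_le; auto.
    - rewrite sum1_S. specialize (IHt' ltac:(lia)). pose proof (Hp (S (S t'))). lra. }
  assert (0 < INR t * w t). { apply Rmult_lt_0_compat; auto. apply lt_0_INR; lia. }
  lra.
Qed.

Lemma lemB_inv (w : nat -> R) T q : (forall i, 0 < w i) -> q <= / 4 ->
  (forall i, (1 <= i)%nat -> INR i <= T -> w (i - 1)%nat <= q * w i) ->
  forall n, INR n + 1 <= T ->
  sum1 n (fun i => (T - INR i) * w i) <= 2 * (T - INR n) * w n.
Proof.
  intros Hp Hq Hr n. induction n; intros Hn.
  - simpl. pose proof (Hp 0%nat). simpl in Hn. nra.
  - rewrite sum1_S; cbv beta. rewrite S_INR in *.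
    assert (IH := IHn ltac:(lra)).
    specialize (Hr (S n) ltac:(lia) ltac:(rewrite S_INR; lra)).
    replace (S n - 1)%nat with n in Hr by lia.
    pose proof (Hp n); pose proof (Hp (S n)).
    assert (2 * (T - INR n) * w n <= 2 * (T - INR n) * (q * w (S n))).
    { apply Rmult_le_compat_l; [pose proof (pos_INR n); lra | exact Hr]. }
    assert (q * w (S n) <= / 4 * w (S n)) by (apply Rmult_le_compat_r; lra).
    assert (2 * (T - INR n) * (q * w (S n)) <= 2 * (T - INR n) * (/4 * w (S n))).
    { apply Rmult_le_compat_l; [pose proof (pos_INR n); lra | lra]. }
    assert (0 <= (T - INR n - 2) * w (S n)) by (apply Rmult_le_pos; lra). nra.
Qed.

Lemma lemB (w : nat -> R) t q : (forall i, 0 < w i) -> q <= / 4 ->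
  (forall i, (1 <= i)%nat -> (i <= t)%nat -> w (i - 1)%nat <= q * w i) ->
  (1 <= t)%nat ->
  sum1 t (fun i => (INR t - INR i) * w i) <= 2 * q * sum1 t w.
Proof.
  intros Hp Hq Hr Ht. destruct t as [|t']; [lia|].
  assert (H := lemB_inv w (INR (S t')) q Hp Hq).
  assert (Hr' : forall i, (1 <= i)%nat -> INR i <= INR (S t') -> w (i - 1)%nat <= q * w i).
  { intros i Hi HiT. apply Hr; auto. apply INR_le; auto. }
  specialize (H Hr' t' ltac:(rewrite S_INR; lra)).
  rewrite sum1_S; cbv beta. replace (INR (S t') - INR (S t')) with 0 by ring.
  rewrite S_INR in H. replace (2 * (INR t' + 1 - INR t')) with 2 in H by ring.
  specialize (Hr (S t') ltac:(lia) ltac:(lia)). replace (S t' - 1)%nat with t' in Hr by lia.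
  pose proof (sum1_ge_last t' w ltac:(intros; apply Rlt_le; auto)).
  simpl in H0.
  assert (0 <= q). { pose proof (Hp t'); pose proof (Hp (S t')). nra. }
  assert (q * w (S t') <= q * (sum1 t' w + w (S t'))) by (apply Rmult_le_compat_l; lra).
  rewrite S_INR, sum1_S. nra.
Qed.

Lemma lemC_inv (w : nat -> R) T Cc : (forall i, 0 < w i) -> 0 <= Cc ->
  T - 1 - Cc >= 1 ->
  (forall i, (2 <= i)%nat -> INR i <= T -> T - INR i - Cc < 1 -> (1 + Cc) * w i <= w (i - 1)%nat) ->
  forall n, (1 <= n)%nat -> INR n <= T ->
  w n <= sum1 n (fun i => (T - INR i - Cc) * w i).
Proof.
  intros Hp HC H1 Hr n Hn. induction Hn; intros HnT.
  - simpl. pose proof (Hp 1%nat). nra.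
  - rewrite sum1_S; cbv beta. rewrite S_INR in HnT.
    assert (IH := IHHn ltac:(lra)).
    pose proof (Hp m); pose proof (Hp (S m)).
    destruct (Rlt_dec (T - INR (S m) - Cc) 1) as [Hl|Hl].
    + specialize (Hr (S m) ltac:(lia) ltac:(rewrite S_INR; lra) Hl).
      replace (S m - 1)%nat with m in Hr by lia.
      rewrite S_INR in *. nra.
    + nra.
Qed.

Lemma lemC (w : nat -> R) t Cc : (forall i, 0 < w i) -> 0 <= Cc ->
  INR t - 1 - Cc >= 1 ->
  (forall i, (2 <= i)%nat -> (i <= t)%nat -> INR t - INR i - Cc < 1 -> (1 + Cc) * w i <= w (i - 1)%nat) ->
  (1 <= t)%nat ->
  0 < sum1 t (fun i => (INR t - INR i - Cc) * w i).
Proof.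
  intros Hp HC H1 Hr Ht.
  assert (H := lemC_inv w (INR t) Cc Hp HC H1).
  assert (Hr' : forall i, (2 <= i)%nat -> INR i <= INR t -> INR t - INR i - Cc < 1 -> (1 + Cc) * w i <= w (i - 1)%nat).
  { intros i Hi HiT. apply Hr; auto. apply INR_le; auto. }
  specialize (H Hr' t Ht (Rle_refl _)). pose proof (Hp t). lra.
Qed.

Definition W (x y : R) (i : nat) : R := exp (x + INR i * y) / d i.

Lemma d_pos i : 0 < d i.
Proof.
  unfold d. apply Rmult_lt_0_compat. apply pow_lt; lra.
  apply lt_0_INR. apply lt_O_fact.
Qed.

Lemma d_S k : d (S k) = d k * (2 ^ k * INR (S k)).
Proof.
  unfold d. 
  assert (Hd : (Nat.div (S k * (S k - 1)) 2) = (Nat.div (k * (k - 1)) 2 + k)%nat).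
  { replace (S k * (S k - 1))%nat with (k * (k - 1) + k * 2)%nat.
    - apply Nat.div_add; lia.
    - destruct k; [reflexivity|]. replace (S (S k) - 1)%nat with (S k) by lia.
      replace (S k - 1)%nat with k by lia. ring. }
  rewrite Hd, pow_add. rewrite fact_simpl, mult_INR. ring.
Qed.

Lemma W_pos x y i : 0 < W x y i.
Proof. unfold W. apply Rdiv_lt_0_compat; [apply exp_pos | apply d_pos]. Qed.

Lemma W_S x y k : W x y (S k) = W x y k * exp y / (2 ^ k * INR (S k)).
Proof.
  unfold W. rewrite d_S. rewrite S_INR.
  replace (x + (INR k + 1) * y) with ((x + INR k * y) + y) by ring.
  rewrite exp_plus. pose proof (d_pos k).
  assert (0 < 2 ^ k) by (apply pow_lt; lra).
  assert (0 < INR k + 1) by (pose proof (pos_INR k); lra).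
  field. split; lra.
Qed.

Lemma sum1_scal n a f : sum1 n (fun i => a * f i) = a * sum1 n f.
Proof. induction n; simpl; [ring| rewrite IHn; ring]. Qed.

Lemma boundA x y t : exp y <= 1 -> (1 <= t)%nat ->
  sum1 t (fun i => INR i * W x y i) < 2 * sum1 t (W x y).
Proof.
  intros HE Ht. apply lemA; auto. intros; apply W_pos.
  intros i Hi. destruct i as [|k]; [lia|]. replace (S k - 1)%nat with k by lia.
  rewrite W_S. pose proof (W_pos x y k). pose proof (exp_pos y).
  assert (2 ^ 1 <= 2 ^ k) by (apply Rle_pow; [lra|lia]). simpl in H1.
  assert (2 <= INR (S k)) by (change 2 with (INR 2); apply le_INR; lia).
  assert (4 <= 2 ^ k * INR (S k)) by nra.
  apply (Rmult_le_reg_r (2 ^ k * INR (S k))); [lra|].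
  field_simplify; [|lra]. nra.
Qed.

Lemma boundB x y t c : 0 < c -> (1 <= t)%nat ->
  INR t * 2 ^ t * Rmax 2 (/ c) <= exp y ->
  sum1 t (fun i => (INR t - INR i) * W x y i) <= c * sum1 t (W x y).
Proof.
  intros Hc Ht HE. set (A := Rmax 2 (/ c)).
  assert (HA2 : 2 <= A) by apply Rmax_l. assert (HAc : / c <= A) by apply Rmax_r.
  set (L := INR t * 2 ^ t).
  assert (HL : 0 < L) by (apply Rmult_lt_0_compat; [apply lt_0_INR; lia | apply pow_lt; lra]).
  pose proof (exp_pos y) as Hy.
  set (q := L / (2 * exp y)).
  assert (Hq : q <= / (2 * A)).
  { unfold q. apply (Rmult_le_reg_r (2 * exp y * (2 * A))); [nra|].
    field_simplify; [|lra|lra]. unfold L, A; lra. }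
  assert (Hq4 : q <= / 4). { apply (Rle_trans _ _ _ Hq). apply Rinv_le_contravar; lra. }
  assert (Hqc : 2 * q <= c).
  { assert (2 * q <= / A) by (rewrite Rinv_mult in Hq; lra).
    apply (Rle_trans _ _ _ H). rewrite <- (Rinv_inv c).
    apply Rinv_le_contravar; [apply Rinv_0_lt_compat; lra | lra]. }
  assert (H := lemB (W x y) t q (W_pos x y) Hq4).
  assert (HS : 0 <= sum1 t (W x y)) by (apply sum1_nonneg; intros; apply Rlt_le, W_pos).
  assert (2 * q * sum1 t (W x y) <= c * sum1 t (W x y)) by (apply Rmult_le_compat_r; lra).
  eapply Rle_trans; [apply H|lra]; auto.
  intros i Hi Hit. destruct i as [|k]; [lia|]. replace (S k - 1)%nat with k by lia.
  rewrite W_S. pose proof (W_pos x y k).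
  assert (HD : 2 ^ k * INR (S k) <= L / 2).
  { destruct t as [|t']; [lia|]. unfold L. rewrite <- tech_pow_Rmult.
    assert (2 ^ k <= 2 ^ t') by (apply Rle_pow; [lra|lia]).
    assert (INR (S k) <= INR (S t')) by (apply le_INR; lia).
    assert (0 <= 2 ^ k) by (apply pow_le; lra).
    assert (0 <= INR (S k)) by apply pos_INR.
    assert (2 ^ k * INR (S k) <= 2 ^ t' * INR (S t')) by (apply Rmult_le_compat; lra).
    lra. }
  assert (0 < 2 ^ k * INR (S k)).
  { apply Rmult_lt_0_compat; [apply pow_lt; lra| apply lt_0_INR; lia]. }
  unfold q. apply (Rmult_le_reg_r (2 ^ k * INR (S k) * (2 * exp y))); [nra|].
  assert (0 < INR (S k)) by (apply lt_0_INR; lia).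
  assert (0 < 2 ^ k) by (apply pow_lt; lra).
  field_simplify; [| repeat split; lra].
  assert (W x y k * exp y * (2 * (2 ^ k * INR (S k))) <= W x y k * exp y * L).
  { apply Rmult_le_compat_l; [nra | lra]. }
  nra.
Qed.

Lemma boundC x y t C N : 0 <= C -> C + 2 <= INR N -> C + 2 <= INR t -> (1 <= t)%nat ->
  exp y <= / (2 ^ N * INR N * (1 + C)) * (INR t * 2 ^ t) ->
  0 < sum1 t (fun i => (INR t - INR i - C) * W x y i).
Proof.
  intros HC HN Ht Ht1 HE.
  assert (HN1 : (1 <= N)%nat) by (apply INR_le; simpl; lra).
  apply lemC; auto. intros; apply W_pos. lra.
  intros i Hi Hit Hlt. destruct i as [|k]; [lia|]. replace (S k - 1)%nat with k by lia.
  rewrite W_S. pose proof (W_pos x y k). pose proof (exp_pos y).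
  rewrite S_INR in Hlt.
  assert (Htk : (t < k + N)%nat) by (apply INR_lt; rewrite plus_INR; lra).
  assert (H2t : 2 ^ t <= 2 ^ N * 2 ^ k) by (rewrite <- pow_add; apply Rle_pow; [lra|lia]).
  assert (Htn : INR t <= INR N * INR (S k)) by (rewrite <- mult_INR; apply le_INR; nia).
  assert (0 < INR (S k)) by (apply lt_0_INR; lia).
  assert (0 < 2 ^ k) by (apply pow_lt; lra).
  assert (0 < 2 ^ N) by (apply pow_lt; lra).
  assert (0 < INR N) by (apply lt_0_INR; lia).
  assert (0 <= INR t) by apply pos_INR.
  assert (0 <= 2 ^ t) by (apply pow_le; lra).
  assert (HL : INR t * 2 ^ t <= (INR N * INR (S k)) * (2 ^ N * 2 ^ k)) by (apply Rmult_le_compat; lra).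
  assert (HE' : (1 + C) * exp y <= 2 ^ k * INR (S k)).
  { apply (Rmult_le_reg_l (2 ^ N * INR N)); [nra|].
    assert ((1 + C) * exp y <= / (2 ^ N * INR N) * (INR t * 2 ^ t)).
    { apply (Rmult_le_reg_l (/ (1 + C))). apply Rinv_0_lt_compat; lra.
      replace (/ (1 + C) * ((1 + C) * exp y)) with (exp y) by (field; lra).
      rewrite Rinv_mult in HE. rewrite Rinv_mult in HE. rewrite Rinv_mult. lra. }
    apply (Rle_trans _ ((2 ^ N * INR N) * (/ (2 ^ N * INR N) * (INR t * 2 ^ t)))).
    apply Rmult_le_compat_l; nra.
    replace ((2 ^ N * INR N) * (/ (2 ^ N * INR N) * (INR t * 2 ^ t))) with (INR t * 2 ^ t) by (field; lra).
    nra. }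
  apply (Rmult_le_reg_r (2 ^ k * INR (S k))); [nra|].
  field_simplify; [| repeat split; lra].
  assert (W x y k * ((1 + C) * exp y) <= W x y k * (2 ^ k * INR (S k))) by (apply Rmult_le_compat_l; lra).
  nra.
Qed.

Lemma sum1_pos t f : (forall i, 0 < f i) -> (1 <= t)%nat -> 0 < sum1 t f.
Proof.
  intros H Ht. destruct t as [|t']; [lia|].
  pose proof (sum1_ge_last t' f ltac:(intros; apply Rlt_le; auto)). specialize (H (S t')). lra.
Qed.

Lemma sum_i_t t x y : sum1 t (fun i => (INR t - INR i) * W x y i) =
  INR t * sum1 t (W x y) + (-1) * sum1 t (fun i => INR i * W x y i).
Proof. rewrite <- sum1_lin. apply sum1_ext; intros; ring. Qed.

Lemma sum_i_tC t x y C : sum1 t (fun i => (INR t - INR i - C) * W x y i) =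
  (INR t - C) * sum1 t (W x y) + (-1) * sum1 t (fun i => INR i * W x y i).
Proof. rewrite <- sum1_lin. apply sum1_ext; intros; ring. Qed.

Lemma eqs_W t rho x y : xy_eqs t rho x y ->
  sum1 t (W x y) = 1 /\ sum1 t (fun i => INR i * W x y i) = rho.
Proof.
  intros [H1 H2]. split.
  - rewrite <- H1. apply sum1_ext; reflexivity.
  - rewrite <- H2. apply sum1_ext; intros; unfold W, Rdiv; ring.
Qed.

Lemma exists_sol t rho c : 0 < c -> (1 <= t)%nat -> 2 <= rho -> c < INR t - rho ->
  exists p : R * R, xy_eqs t rho (fst p) (snd p).
Proof.
  intros Hc Ht Hr Htr.
  set (g := fun y => sum1 t (fun i => (INR i - rho) * W 0 y i)).
  assert (Hg : forall y, g y = 1 * sum1 t (fun i => INR i * W 0 y i) + (- rho) * sum1 t (W 0 y)).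
  { intros y. unfold g. rewrite <- sum1_lin. apply sum1_ext; intros; ring. }
  assert (Hcont : continuity g).
  { unfold g. apply (sum1_cont t (fun i y => (INR i - rho) * W 0 y i)).
    intros i. apply derivable_continuous. unfold W. pose proof (d_pos i). reg. }
  set (A := Rmax 2 (/ c)). set (L := INR t * 2 ^ t).
  assert (HA2 : 2 <= A) by apply Rmax_l.
  assert (HL1 : 1 <= L).
  { unfold L. assert (1 <= INR t) by (apply (le_INR 1); lia).
    assert (1 <= 2 ^ t) by (apply pow_R1_Rle; lra). nra. }
  set (y1 := ln (L * A)).
  assert (Hy1 : 0 < y1).
  { unfold y1. rewrite <- ln_1. apply ln_increasing; lra || nra. }
  assert (Hg0 : g 0 < 0).
  { rewrite Hg. assert (H := boundA 0 0 t ltac:(rewrite exp_0; lra) Ht).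
    assert (0 < sum1 t (W 0 0)) by (apply sum1_pos; auto; intros; apply W_pos). nra. }
  assert (Hg1 : 0 < g y1).
  { rewrite Hg. assert (H := boundB 0 y1 t c Hc Ht).
    rewrite sum_i_t in H. 
    assert (0 < sum1 t (W 0 y1)) by (apply sum1_pos; auto; intros; apply W_pos).
    assert (INR t * 2 ^ t * Rmax 2 (/ c) <= exp y1).
    { unfold y1. rewrite exp_ln; [unfold L, A; lra | nra]. }
    specialize (H H1). nra. }
  destruct (IVT g 0 y1 Hcont Hy1 Hg0 Hg1) as [z [_ Hz]].
  set (S := sum1 t (W 0 z)).
  assert (HS : 0 < S) by (apply sum1_pos; auto; intros; apply W_pos).
  rewrite Hg in Hz.
  exists (- ln S, z). simpl. unfold xy_eqs.
  assert (HW : forall i, exp (- ln S + INR i * z) / d i = / S * W 0 z i).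
  { intros i. unfold W. rewrite exp_plus, Rplus_0_l, exp_Ropp, exp_ln by lra. unfold Rdiv; ring. }
  split.
  - rewrite (sum1_ext t _ (fun i => / S * W 0 z i) HW), sum1_scal. fold S. field. lra.
  - rewrite (sum1_ext t _ (fun i => / S * (INR i * W 0 z i))).
    + rewrite sum1_scal. fold S in Hz. replace (sum1 t (fun i => INR i * W 0 z i)) with (rho * S) by lra. field. lra.
    + intros i. unfold Rdiv at 1. rewrite Rmult_assoc. unfold Rdiv in HW. rewrite HW. ring.
Qed.

Theorem lemma36 :
  forall c C : R, 0 < c -> c < C ->
  exists K : R,
    forall (t : nat) (rho : R),
      (1 <= t)%nat -> 2 <= rho -> c < INR t - rho < C ->
      Rabs (y_t t rho - ln (INR t * 2 ^ t)) <= K.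
Proof.
  intros c C Hc HcC.
  destruct (INR_archimed 1 (C + 2)) as [N HN]; [lra|]. rewrite Rmult_1_r in HN.
  assert (HN1 : (1 <= N)%nat) by (apply INR_le; simpl; lra).
  set (A := Rmax 2 (/ c)).
  assert (HA2 : 2 <= A) by apply Rmax_l.
  assert (HNp : 0 < INR N) by (apply lt_0_INR; lia).
  assert (H2N : 0 < 2 ^ N) by (apply pow_lt; lra).
  set (dl := / (2 ^ N * INR N * (1 + C))).
  assert (Hdl : 0 < dl) by (apply Rinv_0_lt_compat; apply Rmult_lt_0_compat; [nra|lra]).
  exists (Rmax (ln A) (- ln dl)).
  intros t rho Ht Hr [H1 H2].
  assert (Hs := epsilon_spec (inhabits (0, 0)) (fun p => xy_eqs t rho (fst p) (snd p))
                  (exists_sol t rho c Hc Ht Hr H1)).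
  unfold y_t, xy_t. set (p := epsilon _ _) in *. cbv beta in Hs.
  destruct p as [x y]. simpl in *.
  destruct (eqs_W t rho x y Hs) as [HS HiS].
  set (L := INR t * 2 ^ t).
  assert (HL : 0 < L) by (apply Rmult_lt_0_compat; [apply lt_0_INR; lia | apply pow_lt; lra]).
  pose proof (exp_pos y) as Hy.
  assert (Hup : exp y < L * A).
  { apply Rnot_le_lt. intros Hle.
    assert (H := boundB x y t c Hc Ht ltac:(unfold L, A in Hle; lra)).
    rewrite sum_i_t, HS, HiS in H. lra. }
  assert (Hlo : dl * L < exp y).
  { apply Rnot_le_lt. intros Hle.
    destruct (Rle_lt_dec (C + 2) (INR t)) as [Hct|Hct].
    - assert (H := boundC x y t C N ltac:(lra) ltac:(lra) Hct Ht Hle).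
      rewrite sum_i_tC, HS, HiS in H. lra.
    - assert (HtN : (t <= N)%nat) by (apply INR_le; lra).
      assert (L <= 2 ^ N * INR N * (1 + C)).
      { unfold L. assert (INR t <= INR N) by (apply le_INR; lia).
        assert (2 ^ t <= 2 ^ N) by (apply Rle_pow; [lra|lia]).
        assert (0 <= INR t) by apply pos_INR. assert (0 <= 2 ^ t) by (apply pow_le; lra).
        assert (INR t * 2 ^ t <= INR N * 2 ^ N) by (apply Rmult_le_compat; lra).
        assert (0 <= 2 ^ N * INR N * C) by (apply Rmult_le_pos; [nra|lra]). nra. }
      assert (dl * L <= 1).
      { unfold dl. apply (Rmult_le_reg_l (2 ^ N * INR N * (1 + C))); [nra|].
        rewrite <- Rmult_assoc, Rinv_r; nra. }
      assert (HA := boundA x y t ltac:(lra) Ht). rewrite HS, HiS in HA. lra. }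
  assert (Hu : y < ln A + ln L).
  { rewrite <- ln_mult by lra. rewrite <- (ln_exp y) at 1. apply ln_increasing; lra. }
  assert (Hl : ln dl + ln L < y).
  { rewrite <- ln_mult by lra. rewrite <- (ln_exp y). apply ln_increasing; nra. }
  fold L. apply Rabs_le. pose proof (Rmax_l (ln A) (- ln dl)). pose proof (Rmax_r (ln A) (- ln dl)).
  lra.
Qed.
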